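(* Let $\varrho=\sum_{\omega\in\Omega}\varrho(\omega)|\omega\rangle\langle\omega|$ and $\sigma=\sum_{\omega\in\Omega}\sigma(\omega)|\omega\rangle\langle\omega|$ be commuting density operators, diagonal in a common orthonormal basis $(|\omega\rangle)_{\omega\in\Omega}$ of a finite-dimensional Hilbert space. The following are equivalent: (1) $D_\alpha^{\mathrm{test}}(\varrho\|\sigma)=D_\alpha(\varrho\|\sigma)$ for all $\alpha\in(0,1)$; (2) $D_\alpha^{\mathrm{test}}(\varrho\|\sigma)=D_\alpha(\varrho\|\sigma)$ for some $\alpha\in(0,1)$; (3) there is $\Omega_0\subseteq\Omega$, with $\Omega_1:=\Omega\setminus\Omega_0$, such that $\sigma(\Omega_0)\varrho(\omega)=\varrho(\Omega_0)\sigma(\omega)$ for $\omega\in\Omega_0$ and $\sigma(\Omega_1)\varrho(\omega)=\varrho(\Omega_1)\sigma(\omega)$ for $\omega\in\Omega_1$. Moreover, if these hold then $D_\alpha^{\mathrm{test}}(\varrho\|\sigma)=\hat D_\alpha^{\mathrm{test}}(\varrho\|\sigma)=D_\alpha(\varrho\|\sigma)$ for all $\alpha\in(0,1)$.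
   Context: $\varrho(\Omega_0):=\sum_{\omega\in\Omega_0}\varrho(\omega)$, etc. For probability vectors $p,q$ and $\alpha\in(0,1)$, $D_\alpha(p\|q)=\frac{1}{\alpha-1}\log\sum_xp(x)^\alpha q(x)^{1-\alpha}$; for commuting states $D_\alpha(\varrho\|\sigma)$ is the classical divergence of the eigenvalue vectors. A test is an operator $0\le T\le I$; $\mathcal T(X):=(\operatorname{Tr}XT,\operatorname{Tr}X(I-T))$; $D_\alpha^{\mathrm{test}}(\varrho\|\sigma):=\max_{0\le T\le I}D_\alpha(\mathcal T(\varrho)\|\mathcal T(\sigma))$; $\hat D_\alpha^{\mathrm{test}}:=\sup_n\frac1nD_\alpha^{\mathrm{test}}(\varrho^{\otimes n}\|\sigma^{\otimes n})$. *)

(* Defs.v *)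
From HB Require Import structures.
From mathcomp Require Import all_boot all_order all_algebra.
From mathcomp Require Import all_classical all_reals ereal exp.
From mathcomp Require Import complex mxtens.

Set Implicit Arguments.
Unset Strict Implicit.
Unset Printing Implicit Defensive.

Import Order.TTheory GRing.Theory Num.Theory.
Local Open Scope ring_scope.
Local Open Scope classical_set_scope.

Section QuantumRenyi.
Variable R : realType.
Local Notation C := (R[i]).

Definition is_prob (I : finType) (p : I -> R) : Prop :=
  (forall x, 0 <= p x) /\ \sum_(x : I) p x = 1.

(** classical Renyi divergence
    D_a(p||q) = 1/(a-1) log sum_x p(x)^a q(x)^(1-a),
    with values in [0,+oo]: log 0 = -oo, so for a in (0,1) the value is +oo
    when the sum vanishes. *)
Definition renyi (I : finType) (a : R) (p q : I -> R) : \bar R :=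
  let s := \sum_(x : I) (p x `^ a * q x `^ (1 - a)) in
  if s == 0 then +oo%E else (((a - 1)^-1 * ln s)%:E).

Definition adjmx m n (A : 'M[C]_(m, n)) : 'M[C]_(n, m) := map_mx Num.conj A^T.

Definition psdmx n (A : 'M[C]_n) : Prop :=
  adjmx A = A /\ forall v : 'rV[C]_n, 0 <= (v *m A *m adjmx v) 0 0.

Definition is_test n (T : 'M[C]_n) : Prop := psdmx T /\ psdmx (1%:M - T).

(** the binary measurement map  X |-> (Tr X T, Tr X (I - T))  (real parts;
    these traces are real for X, T Hermitian) *)
Definition test_dist n (X T : 'M[C]_n) : bool -> R :=
  fun b => if b then complex.Re (\tr (X *m T)) else complex.Re (\tr (X *m (1%:M - T))).

Definition Dtest n (rho sigma : 'M[C]_n) (a : R) : \bar R :=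
  ereal_sup [set renyi a (test_dist rho T) (test_dist sigma T) | T in is_test (n:=n)].

Definition Dtest_hat n (rho sigma : 'M[C]_n) (a : R) : \bar R :=
  ereal_sup [set (((k.+1)%:R^-1 : R)%:E *
                 Dtest (ntensmx rho k.+1) (ntensmx sigma k.+1) a)%E | k in [set: nat]].

Definition diag_state d (p : 'I_d -> R) : 'M[C]_d :=
  diag_mx (\row_i ((p i)%:C)%C).

End QuantumRenyi.

(* Main.v *)
Require Import Defs.
From HB Require Import structures.
From mathcomp Require Import all_boot all_order all_algebra.
From mathcomp Require Import all_classical all_reals ereal exp.
From mathcomp Require Import complex mxtens.
From mathcomp Require Import ring lra sequences.

Import Order.TTheory GRing.Theory Num.Theory.
Local Open Scope ring_scope.

Set Implicit Arguments. Unset Strict Implicit.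


Section Real.
Variable R : realType.
Implicit Types (a u v x y c : R).

Definition gm a u v : R := u `^ a * v `^ (1 - a).

Lemma gm_ge0 a u v : 0 <= gm a u v.
Proof. by rewrite /gm mulr_ge0 ?powR_ge0. Qed.

Lemma gm_diag a u : 0 <= u -> gm a u u = u.
Proof.
move=> u0; rewrite /gm -powRD; last by rewrite addrC subrK oner_eq0.
by rewrite addrC subrK powRr1.
Qed.

Lemma gm0l a v : 0 < a -> gm a 0 v = 0.
Proof. by move=> a0; rewrite /gm powR0 ?mul0r // gt_eqF. Qed.

Lemma gm0r a u : a < 1 -> gm a u 0 = 0.
Proof. by move=> a1; rewrite /gm powR0 ?mulr0 // subr_eq0 eq_sym lt_eqF. Qed.

Lemma gmM a c u v : 0 <= c -> 0 <= u -> 0 <= v -> gm a (c * u) (c * v) = c * gm a u v.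
Proof.
move=> c0 u0 v0; rewrite /gm !powRM // mulrACA -/(gm a c c) gm_diag //.
Qed.

Lemma gmM2 a c c' u v : 0 <= c -> 0 <= c' -> 0 <= u -> 0 <= v ->
  gm a (c * u) (c' * v) = gm a c c' * gm a u v.
Proof. by move=> c0 c'0 u0 v0; rewrite /gm !powRM // mulrACA. Qed.

Lemma amgm_lt a u v : 0 < a < 1 -> 0 <= u -> 0 <= v -> u != v ->
  gm a u v < a * u + (1 - a) * v.
Proof.
move=> /andP[a0 a1] u0 v0 uv.
have a1' : 0 < 1 - a by rewrite subr_gt0.
have [e|u0'] := eqVneq u 0.
  rewrite e in uv *.
  have vp : 0 < v by rewrite lt_def eq_sym uv v0.
  by rewrite gm0l // mulr0 add0r mulr_gt0.
have [e|v0'] := eqVneq v 0.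
  rewrite e in uv *.
  have up : 0 < u by rewrite lt_def uv u0.
  by rewrite gm0r // mulr0 addr0 mulr_gt0.
have up : 0 < u by rewrite lt_neqAle eq_sym u0' u0.
have vp : 0 < v by rewrite lt_neqAle eq_sym v0' v0.
rewrite /gm /powR (negbTE u0') (negbTE v0') -expRD.
set w := ln u; set z := ln v.
set m := a * w + (1 - a) * z.
have wz : w != z.
  by apply: contra uv => /eqP e; apply/eqP; rewrite -(lnK up) -(lnK vp) -/w -/z e.
have eu : u = expR m * expR (w - m) by rewrite -expRD addrC subrK /w lnK.
have ev : v = expR m * expR (z - m) by rewrite -expRD addrC subrK /z lnK.
have x1 : w - m != 0.
  rewrite /m; have -> : w - (a * w + (1 - a) * z) = (1 - a) * (w - z) by ring.
  by apply: mulf_neq0; [rewrite gt_eqF | rewrite subr_eq0].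
have x2 : z - m != 0.
  rewrite /m; have -> : z - (a * w + (1 - a) * z) = a * (z - w) by ring.
  by apply: mulf_neq0; [rewrite gt_eqF | rewrite subr_eq0 eq_sym].
have h1 := expR_gt1Dx x1; have h2 := expR_gt1Dx x2.
have em := expR_gt0 m.
apply: (@le_lt_trans _ _ (a * (expR m * (1 + (w - m))) + (1 - a) * (expR m * (1 + (z - m))))).
  have -> : a * (expR m * (1 + (w - m))) + (1 - a) * (expR m * (1 + (z - m)))
     = expR m * (1 + (a * w + (1 - a) * z - m)) by ring.
  by rewrite /m subrr addr0 mulr1.
have -> : a * u + (1 - a) * v = a * (expR m * expR (w - m)) + (1 - a) * (expR m * expR (z - m)) by rewrite -eu -ev.
by rewrite ltrD // ltr_pM2l // ltr_pM2l.
Qed.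

Lemma amgm_le a u v : 0 < a < 1 -> 0 <= u -> 0 <= v ->
  gm a u v <= a * u + (1 - a) * v.
Proof.
move=> a01 u0 v0; have [->|uv] := eqVneq u v.
  by rewrite gm_diag // -mulrDl addrC subrK mul1r.
exact/ltW/amgm_lt.
Qed.


Lemma holder_main (I : finType) a (x y : I -> R) : 0 < a < 1 ->
  (forall i, 0 <= x i) -> (forall i, 0 <= y i) ->
  \sum_i gm a (x i) (y i) <= gm a (\sum_i x i) (\sum_i y i) /\
  (\sum_i gm a (x i) (y i) = gm a (\sum_i x i) (\sum_i y i) <->
   forall i, (\sum_j y j) * x i = (\sum_j x j) * y i).
Proof.
move=> a01 x0 y0; have /andP[a0 a1] := a01.
set A := \sum_j x j; set B := \sum_j y j.
have A0 : 0 <= A by rewrite sumr_ge0.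
have B0 : 0 <= B by rewrite sumr_ge0.
have [eA|nA] := eqVneq A 0.
  have xi : forall i, x i = 0.
    by move=> i; apply: (psumr_eq0P (fun i _ => x0 i) eA).
  have -> : \sum_i gm a (x i) (y i) = 0 by apply: big1 => i _; rewrite xi gm0l.
  rewrite eA gm0l //; split => //; split => // _ i; by rewrite xi mulr0 mul0r.
have [eB|nB] := eqVneq B 0.
  have yi : forall i, y i = 0.
    by move=> i; apply: (psumr_eq0P (fun i _ => y0 i) eB).
  have -> : \sum_i gm a (x i) (y i) = 0 by apply: big1 => i _; rewrite yi gm0r.
  rewrite eB gm0r //; split => //; split => // _ i; by rewrite yi mulr0 mul0r.
have Ap : 0 < A by rewrite lt_def nA A0.
have Bp : 0 < B by rewrite lt_def nB B0.
pose u := fun i => x i / A; pose v := fun i => y i / B.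
have u0 : forall i, 0 <= u i by move=> i; rewrite /u divr_ge0.
have v0 : forall i, 0 <= v i by move=> i; rewrite /v divr_ge0.
have key : forall i, gm a (x i) (y i) = gm a A B * gm a (u i) (v i).
  move=> i; rewrite -gmM2 // /u /v.
  by rewrite !(mulrC _ (_ / _)) !divfK.
have su : \sum_i u i = 1 by rewrite /u -mulr_suml divff.
have sv : \sum_i v i = 1 by rewrite /v -mulr_suml divff.
have G0 : 0 < gm a A B by rewrite /gm mulr_gt0 // powR_gt0.
have eS : \sum_i gm a (x i) (y i) = gm a A B * \sum_i gm a (u i) (v i).
  by rewrite mulr_sumr; apply: eq_bigr => i _; rewrite key.
have eT : \sum_i (a * u i + (1 - a) * v i) = 1.
  by rewrite big_split /= -!mulr_sumr su sv !mulr1 addrC subrK.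
have le1 : \sum_i gm a (u i) (v i) <= 1.
  by rewrite -eT; apply: ler_sum => i _; apply: amgm_le.
rewrite eS; split; first by rewrite -[X in _ <= X]mulr1 ler_pM2l.
have uv : forall i, (u i = v i) <-> (B * x i = A * y i).
  move=> i; rewrite /u /v; split.
    by move/eqP; rewrite eqr_div ?lt0r_neq0 // => /eqP e; rewrite mulrC e mulrC.
  by move=> e; apply/eqP; rewrite eqr_div ?lt0r_neq0 // mulrC e mulrC.
split.
- move=> e i.
  have e1 : \sum_i gm a (u i) (v i) = 1.
    by apply: (mulfI (lt0r_neq0 G0)); rewrite e mulr1.
  have d0 : \sum_i (a * u i + (1 - a) * v i - gm a (u i) (v i)) = 0.
    by rewrite sumrB eT e1 subrr.
  have dge : forall i, true -> 0 <= a * u i + (1 - a) * v i - gm a (u i) (v i).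
    by move=> j _; rewrite subr_ge0 amgm_le.
  have di : a * u i + (1 - a) * v i - gm a (u i) (v i) = 0.
    exact: (psumr_eq0P dge d0).
  apply/uv; apply/eqP; apply: contraT => nuv.
  have := @amgm_lt a (u i) (v i) a01 (u0 i) (v0 i) nuv.
  by move/eqP: di; rewrite subr_eq0 => /eqP ->; rewrite ltxx.
- move=> h.
  have -> : \sum_i gm a (u i) (v i) = 1.
    by rewrite -su; apply: eq_bigr => i _; rewrite (proj2 (uv i) (h i)) gm_diag.
  by rewrite mulr1.
Qed.


Lemma gm_concave a l x1 y1 x2 y2 : 0 < a < 1 -> 0 <= l <= 1 ->
  0 <= x1 -> 0 <= y1 -> 0 <= x2 -> 0 <= y2 ->
  l * gm a x1 y1 + (1 - l) * gm a x2 y2 <= gm a (l * x1 + (1 - l) * x2) (l * y1 + (1 - l) * y2).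
Proof.
move=> a01 /andP[l0 l1] x10 y10 x20 y20.
have l1' : 0 <= 1 - l by rewrite subr_ge0.
have := proj1 (@holder_main bool a (fun b => if b then l * x1 else (1 - l) * x2)
                 (fun b => if b then l * y1 else (1 - l) * y2) a01 _ _).
rewrite !big_bool /= !gmM //; apply.
  by case; rewrite mulr_ge0.
by case; rewrite mulr_ge0.
Qed.

Definition sfun {I : finType} a (p q t : I -> R) : R :=
  gm a (\sum_i p i * t i) (\sum_i q i * t i) +
  gm a (\sum_i p i * (1 - t i)) (\sum_i q i * (1 - t i)).

Definition Sval {I : finType} a (p q : I -> R) : R := \sum_i gm a (p i) (q i).

Definition cube {I : finType} (t : I -> R) := forall i, 0 <= t i <= 1.

Lemma sfun_ge (I : finType) a (p q t : I -> R) : 0 < a < 1 ->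
  (forall i, 0 <= p i) -> (forall i, 0 <= q i) -> cube t ->
  Sval a p q <= sfun a p q t /\
  (Sval a p q = sfun a p q t <->
   (forall i, (\sum_j q j * t j) * (p i * t i) = (\sum_j p j * t j) * (q i * t i)) /\
   (forall i, (\sum_j q j * (1 - t j)) * (p i * (1 - t i)) =
              (\sum_j p j * (1 - t j)) * (q i * (1 - t i)))).
Proof.
move=> a01 p0 q0 ct.
have t0 : forall i, 0 <= t i by move=> i; case/andP: (ct i).
have t1 : forall i, 0 <= 1 - t i by move=> i; case/andP: (ct i) => _; rewrite subr_ge0.
have [H1 E1] := @holder_main I a (fun i => p i * t i) (fun i => q i * t i) a01
   (fun i => mulr_ge0 (p0 i) (t0 i)) (fun i => mulr_ge0 (q0 i) (t0 i)).
have [H2 E2] := @holder_main I a (fun i => p i * (1 - t i)) (fun i => q i * (1 - t i)) a01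
   (fun i => mulr_ge0 (p0 i) (t1 i)) (fun i => mulr_ge0 (q0 i) (t1 i)).
have eS : Sval a p q = \sum_i gm a (p i * t i) (q i * t i) +
                       \sum_i gm a (p i * (1 - t i)) (q i * (1 - t i)).
  rewrite /Sval -big_split /=; apply: eq_bigr => i _.
  rewrite ![p i * _]mulrC ![q i * _]mulrC !gmM // -mulrDl addrC subrK mul1r //.
rewrite /sfun eS; split; first exact: lerD.
split.
- move=> e; split; [apply/E1|apply/E2].
  + apply/eqP; rewrite eq_le H1 /=.
    by rewrite -(lerD2r (\sum_i gm a (p i * (1 - t i)) (q i * (1 - t i)))) e lerD2l.
  + apply/eqP; rewrite eq_le H2 /=.
    by rewrite -(lerD2l (\sum_i gm a (p i * t i) (q i * t i))) e lerD2r.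
- by case=> /E1 -> /E2 ->.
Qed.


Definition ind {I : finType} (Om : {set I}) : I -> R := fun i => if i \in Om then 1 else 0.

Lemma cube_ind (I : finType) (Om : {set I}) : cube (ind Om).
Proof. by move=> i; rewrite /ind; case: (i \in Om); rewrite ?lexx ?ler01. Qed.

Lemma sfun_concave (I : finType) a (p q u v : I -> R) l : 0 < a < 1 -> 0 <= l <= 1 ->
  (forall i, 0 <= p i) -> (forall i, 0 <= q i) -> cube u -> cube v ->
  l * sfun a p q u + (1 - l) * sfun a p q v <= sfun a p q (fun i => l * u i + (1 - l) * v i).
Proof.
move=> a01 l01 p0 q0 cu cv.
have u0 : forall i, 0 <= u i by move=> i; case/andP: (cu i).
have u1 : forall i, 0 <= 1 - u i by move=> i; case/andP: (cu i) => _; rewrite subr_ge0.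
have v0 : forall i, 0 <= v i by move=> i; case/andP: (cv i).
have v1 : forall i, 0 <= 1 - v i by move=> i; case/andP: (cv i) => _; rewrite subr_ge0.
have lin : forall (w : I -> R) (f g : I -> R),
   \sum_i w i * (l * f i + (1 - l) * g i) = l * \sum_i w i * f i + (1 - l) * \sum_i w i * g i.
  move=> w f g; rewrite !mulr_sumr -big_split /=; apply: eq_bigr => i _; ring.
have lin' : forall (w : I -> R),
   \sum_i w i * (1 - (l * u i + (1 - l) * v i)) =
     l * \sum_i w i * (1 - u i) + (1 - l) * \sum_i w i * (1 - v i).
  move=> w; rewrite -lin; apply: eq_bigr => i _; ring.
rewrite /sfun lin lin lin' lin'.
have S0 : forall (w f : I -> R), (forall i, 0 <= w i) -> (forall i, 0 <= f i) -> 0 <= \sum_i w i * f i.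
  by move=> w f w0 f0; apply: sumr_ge0 => i _; rewrite mulr_ge0.
have -> : l * (gm a (\sum_i p i * u i) (\sum_i q i * u i) + gm a (\sum_i p i * (1 - u i)) (\sum_i q i * (1 - u i))) +
  (1 - l) * (gm a (\sum_i p i * v i) (\sum_i q i * v i) + gm a (\sum_i p i * (1 - v i)) (\sum_i q i * (1 - v i)))
  = (l * gm a (\sum_i p i * u i) (\sum_i q i * u i) + (1 - l) * gm a (\sum_i p i * v i) (\sum_i q i * v i)) +
    (l * gm a (\sum_i p i * (1 - u i)) (\sum_i q i * (1 - u i)) + (1 - l) * gm a (\sum_i p i * (1 - v i)) (\sum_i q i * (1 - v i))).
  by ring.
by apply: lerD; apply: gm_concave => //; apply: S0.
Qed.


Lemma vertex (I : finType) a (p q t : I -> R) : 0 < a < 1 ->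
  (forall i, 0 <= p i) -> (forall i, 0 <= q i) -> cube t ->
  exists Om : {set I}, sfun a p q (ind Om) <= sfun a p q t.
Proof.
move=> a01 p0 q0.
pose F (t : I -> R) := [set i | 0 < t i < 1].
suff : forall n t, cube t -> (#|F t| <= n)%N -> exists Om : {set I}, sfun a p q (ind Om) <= sfun a p q t.
  by move=> H ct; apply: (H #|F t|).
elim=> [|n IH] {}t ct hF.
  exists [set i | t i == 1].
  have -> : ind [set i | t i == 1] = t; last by [].
  apply: funext => i; rewrite /ind inE.
  have : i \notin F t.
    by move: hF; rewrite leqn0 cards_eq0 => /eqP ->; rewrite inE.
  rewrite inE; case/andP: (ct i) => ti0 ti1.
  have [e|ne] := eqVneq (t i) 1; first by rewrite e ?eqxx.
  rewrite (lt_def (t i) 1) eq_sym ne ti1 andbT => h.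
  by move: h; rewrite andbT => h; apply/eqP; rewrite eq_le ti0 /= leNgt.
have [hn|hn] := leqP #|F t| n; first exact: IH.
have : (0 < #|F t|)%N by apply: leq_ltn_trans hn.
case/card_gt0P => i; rewrite inE => /andP[ti0 ti1].
pose t1 := fun j => if j == i then 1 else t j.
pose t0 := fun j => if j == i then 0 else t j.
have ct1 : cube t1 by move=> j; rewrite /t1; case: (j == i) => //; rewrite lexx ler01.
have ct0 : cube t0 by move=> j; rewrite /t0; case: (j == i) => //; rewrite lexx ler01.
have hsub : forall t', (forall j, j != i -> t' j = t j) -> ~~ (0 < t' i < 1) -> (#|F t'| <= n)%N.
  move=> t' et' ni.
  have sub : F t' \subset F t :\ i.
    apply/fintype.subsetP => j; rewrite !inE => hj.
    have ji : j != i by apply: contraNneq ni => <-.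
    by rewrite ji -et'.
  apply: leq_trans (subset_leq_card sub) _.
  have := cardsD1 i (F t); rewrite inE ti0 ti1 /= add1n => e.
  by move: hF; rewrite e ltnS.
have [Om1 h1] : exists Om : {set I}, sfun a p q (ind Om) <= sfun a p q t1.
  apply: IH => //; apply: hsub; first by move=> j /negbTE; rewrite /t1 => ->.
  by rewrite /t1 eqxx ltxx andbF.
have [Om0 h0] : exists Om : {set I}, sfun a p q (ind Om) <= sfun a p q t0.
  apply: IH => //; apply: hsub; first by move=> j /negbTE; rewrite /t0 => ->.
  by rewrite /t0 eqxx ltxx.
have l01 : 0 <= t i <= 1 by rewrite !ltW.
have conc := @sfun_concave I a p q t1 t0 (t i) a01 l01 p0 q0 ct1 ct0.
have et : (fun j => t i * t1 j + (1 - t i) * t0 j) = t.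
  apply: funext => j; rewrite /t1 /t0; case: eqVneq => [->|_]; first by ring.
  by ring.
rewrite et in conc.
have [le10|le01] := lerP (sfun a p q t1) (sfun a p q t0).
  exists Om1; apply: le_trans h1 _; apply: le_trans conc.
  have : 0 <= (1 - t i) * (sfun a p q t0 - sfun a p q t1).
    by rewrite mulr_ge0 // subr_ge0 // ltW.
  lra.
exists Om0; apply: le_trans h0 _; apply: le_trans conc.
have : 0 <= t i * (sfun a p q t1 - sfun a p q t0).
  by rewrite mulr_ge0 ?subr_ge0 ?ltW.
lra.
Qed.

End Real.
Arguments gm {R}.
Arguments sfun {R I}.
Arguments Sval {R I}.
Arguments cube {R I}.
Arguments ind {R I}.


Section Mat.
Variable R : realType.
Local Notation C := (R[i]).

Lemma ReD (x y : C) : complex.Re (x + y) = complex.Re x + complex.Re y.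
Proof. by case: x; case: y. Qed.

Lemma Re_sum (I : finType) (F : I -> C) : complex.Re (\sum_i F i) = \sum_i complex.Re (F i).
Proof. by apply: (big_morph _ ReD). Qed.

Lemma ReMc (x : R) (z : C) : complex.Re (x%:C%C * z) = x * complex.Re z.
Proof. by case: z => u v /=; rewrite mul0r subr0. Qed.

Lemma Re1B (z : C) : complex.Re (1 - z) = 1 - complex.Re z.
Proof. by case: z. Qed.

Lemma Re_tr_diag n (p : 'I_n -> R) (M : 'M[C]_n) :
  complex.Re (\tr (diag_state p *m M)) = \sum_i p i * complex.Re (M i i).
Proof.
rewrite /diag_state mul_diag_mx /mxtrace Re_sum; apply: eq_bigr => i _.
by rewrite !mxE ReMc.
Qed.


Lemma quad_delta n (M : 'M[C]_n) i :
  ((delta_mx 0 i : 'rV[C]_n) *m M *m adjmx (delta_mx 0 i : 'rV[C]_n)) 0 0 = M i i.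
Proof.
have -> : adjmx (delta_mx 0 i : 'rV[C]_n) = delta_mx i 0.
  apply/matrixP => j k; rewrite /adjmx !mxE.
  by rewrite conjC_nat andbC.
by rewrite -rowE -colE !mxE.
Qed.

Lemma test_entry n (T : 'M[C]_n) i : is_test T ->
  0 <= complex.Re (T i i) <= 1.
Proof.
case=> [[_ h1] [_ h2]].
have := h1 (delta_mx 0 i : 'rV[C]_n); have := h2 (delta_mx 0 i : 'rV[C]_n).
rewrite !quad_delta !lecE /= !mxE eqxx /= => /andP[_ a] /andP[_ b].
by rewrite b /= -subr_ge0 -Re1B.
Qed.


Lemma psd_diag n (r : 'I_n -> R) : (forall i, 0 <= r i) -> psdmx (diag_state r).
Proof.
move=> r0; split.
  apply/matrixP => i j; rewrite /adjmx /diag_state !mxE eq_sym.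
  case: eqVneq => [->|_]; rewrite ?mulr1n ?mulr0n ?rmorph0 //; exact: conjc_real.
move=> v; rewrite /diag_state mul_mx_diag !mxE.
apply: sumr_ge0 => j _; rewrite !mxE mulrAC mulrC.
by apply: mulr_ge0; [rewrite ler0c | apply: mul_conjC_ge0].
Qed.

Lemma test_diag n (t : 'I_n -> R) : cube t -> is_test (diag_state t).
Proof.
move=> ct; split; first by apply: psd_diag => i; case/andP: (ct i).
have -> : 1%:M - diag_state t = diag_state (fun i => 1 - t i).
  apply/matrixP => i j; rewrite /diag_state !mxE.
  by case: (i == j); rewrite ?mulr1n ?mulr0n ?subr0 // raddfB.
by apply: psd_diag => i; case/andP: (ct i) => _; rewrite subr_ge0.
Qed.

Lemma test_dist_diag n (p : 'I_n -> R) (T : 'M[C]_n) :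
  test_dist (diag_state p) T true = \sum_i p i * complex.Re (T i i) /\
  test_dist (diag_state p) T false = \sum_i p i * (1 - complex.Re (T i i)).
Proof.
rewrite /test_dist !Re_tr_diag; split => //.
by apply: eq_bigr => i _; rewrite !mxE eqxx Re1B.
Qed.

Definition Rf (a s : R) : \bar R := if s == 0 then +oo%E else ((a - 1)^-1 * ln s)%:E.

Lemma renyi_Rf n a (p q : 'I_n -> R) : renyi a p q = Rf a (Sval a p q).
Proof. by []. Qed.

Lemma renyi_test n a (p q : 'I_n -> R) (T : 'M[C]_n) :
  renyi a (test_dist (diag_state p) T) (test_dist (diag_state q) T) =
  Rf a (sfun a p q (fun i => complex.Re (T i i))).
Proof.
have [e1 e2] := @test_dist_diag n p T; have [e3 e4] := @test_dist_diag n q T.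
by rewrite /renyi big_bool e1 e2 e3 e4.
Qed.

Lemma Rf_anti (a s1 s2 : R) : a < 1 -> 0 <= s1 -> s1 <= s2 -> (Rf a s2 <= Rf a s1)%E.
Proof.
move=> a1 s10 s12; rewrite /Rf.
case: ifPn => h2; case: ifPn => h1 //; rewrite ?leey //.
  exfalso; move/negP: h1; apply; rewrite eq_le s10 andbT.
  by move/eqP: h2 => <-.
have p1 : 0 < s1 by rewrite lt_def h1 s10.
have p2 : 0 < s2 by apply: lt_le_trans s12.
rewrite lee_fin ler_wnM2l //.
  by rewrite invr_le0 subr_le0 ltW.
by rewrite ler_ln.
Qed.

Lemma Rf_santi (a s1 s2 : R) : a < 1 -> 0 <= s1 -> s1 < s2 -> (Rf a s2 < Rf a s1)%E.
Proof.
move=> a1 s10 s12; rewrite /Rf.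
have p2 : 0 < s2 by apply: le_lt_trans s12.
rewrite gt_eqF //.
case: ifPn => h1; rewrite ?ltey //.
have p1 : 0 < s1 by rewrite lt_def h1 s10.
rewrite lte_fin ltr_nM2l //.
  by rewrite ltr_ln.
by rewrite invr_lt0 subr_lt0.
Qed.

End Mat.
Arguments Rf {R}.


Section Main.
Variable R : realType.
Local Notation C := (R[i]).

Lemma cube_test n (T : 'M[C]_n) : is_test T -> cube (fun i => complex.Re (T i i)).
Proof. by move=> hT i; apply: test_entry. Qed.

Lemma sfun_ge0 (I : finType) a (p q t : I -> R) : 0 <= sfun a p q t.
Proof. by rewrite /sfun addr_ge0 ?gm_ge0. Qed.

Lemma Sval_ge0 (I : finType) a (p q : I -> R) : 0 <= Sval a p q.
Proof. by rewrite /Sval sumr_ge0 // => i _; rewrite gm_ge0. Qed.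

Lemma Dtest_le n a (P Q : 'I_n -> R) : 0 < a < 1 ->
  (forall i, 0 <= P i) -> (forall i, 0 <= Q i) ->
  (Dtest (diag_state P) (diag_state Q) a <= Rf a (Sval a P Q))%E.
Proof.
move=> a01 P0 Q0; have /andP[_ a1] := a01.
apply: ge_ereal_sup => _ [T hT <-]; rewrite renyi_test.
apply: Rf_anti => //; first exact: Sval_ge0.
by case: (sfun_ge a01 P0 Q0 (cube_test hT)).
Qed.

Lemma diag_ind n (Om : {set 'I_n}) :
  (fun i => complex.Re (diag_state (R:=R) (ind Om) i i)) = ind Om.
Proof. by apply: funext => i; rewrite /diag_state !mxE eqxx mulr1n. Qed.

Lemma Dtest_ge_ind n a (P Q : 'I_n -> R) (Om : {set 'I_n}) :
  (Rf a (sfun a P Q (ind Om)) <= Dtest (diag_state P) (diag_state Q) a)%E.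
Proof.
apply: ereal_sup_ubound; exists (diag_state (ind Om)).
  exact/test_diag/cube_ind.
by rewrite renyi_test diag_ind.
Qed.

Lemma Dtest_le_vertex n a (P Q : 'I_n -> R) (Om0 : {set 'I_n}) : 0 < a < 1 ->
  (forall i, 0 <= P i) -> (forall i, 0 <= Q i) ->
  (forall Om, sfun a P Q (ind Om0) <= sfun a P Q (ind Om)) ->
  (Dtest (diag_state P) (diag_state Q) a <= Rf a (sfun a P Q (ind Om0)))%E.
Proof.
move=> a01 P0 Q0 hmin; have /andP[_ a1] := a01.
apply: ge_ereal_sup => _ [T hT <-]; rewrite renyi_test.
have [Om hOm] := vertex a01 P0 Q0 (cube_test hT).
apply: Rf_anti => //; first exact: sfun_ge0.
exact: le_trans (hmin Om) hOm.
Qed.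

Definition cond n (p q : 'I_n -> R) (Om0 : {set 'I_n}) :=
  (forall w, w \in Om0 ->
         (\sum_(x in Om0) q x) * p w = (\sum_(x in Om0) p x) * q w) /\
  (forall w, w \in ~: Om0 ->
         (\sum_(x in ~: Om0) q x) * p w = (\sum_(x in ~: Om0) p x) * q w).

Lemma sum_ind n (f : 'I_n -> R) (Om : {set 'I_n}) :
  \sum_j f j * ind Om j = \sum_(j in Om) f j.
Proof. by rewrite [RHS]big_mkcond; apply: eq_bigr => j _; rewrite /ind; case: (j \in Om); rewrite ?mulr1 ?mulr0. Qed.

Lemma sum_indC n (f : 'I_n -> R) (Om : {set 'I_n}) :
  \sum_j f j * (1 - ind Om j) = \sum_(j in ~: Om) f j.
Proof.
rewrite [RHS]big_mkcond; apply: eq_bigr => j _; rewrite /ind inE.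
by case: (j \in Om); rewrite /= ?subrr ?subr0 ?mulr1 ?mulr0.
Qed.

Lemma cond_iff n a (p q : 'I_n -> R) (Om : {set 'I_n}) : 0 < a < 1 ->
  (forall i, 0 <= p i) -> (forall i, 0 <= q i) ->
  (Sval a p q = sfun a p q (ind Om) <-> cond p q Om).
Proof.
move=> a01 p0 q0.
have [_ E] := sfun_ge a01 p0 q0 (@cube_ind R _ Om).
rewrite E !sum_ind !sum_indC; split.
- case=> [h1 h2]; split => w hw.
    by have := h1 w; rewrite /ind hw !mulr1.
  by have := h2 w; move: hw; rewrite inE /ind => /negbTE ->; rewrite subr0 !mulr1.
- case=> [h1 h2]; split => w; rewrite /ind; case: ifPn => hw.
  + by rewrite !mulr1 h1.
  + by rewrite !mulr0.
  + by rewrite subrr !mulr0.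
  + by rewrite subr0 !mulr1 h2 // inE.
Qed.

End Main.

Unset Implicit Arguments. Set Strict Implicit.


Section Tens.
Variable R : realType.
Local Notation C := (R[i]).

Lemma tens_diag m n (f : 'I_m -> R) (g : 'I_n -> R) :
  tensmx (diag_state f) (diag_state g) =
  diag_state (fun k => f (mxtens_unindex k).1 * g (mxtens_unindex k).2).
Proof.
apply/matrixP => i j; rewrite /diag_state !mxE.
have [<-|nij] := eqVneq i j; first by rewrite !eqxx !mulr1n rmorphM.
have : mxtens_unindex i != mxtens_unindex j.
  by apply: contra nij => /eqP /(can_inj (@mxtens_unindexK m n)) ->.
case: (mxtens_unindex i) (mxtens_unindex j) => [i1 i2] [j1 j2].
rewrite xpair_eqE negb_and mulr0n => /orP[] /negbTE -> /=.
  by rewrite mulr0n mul0r.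
by rewrite mulr0n mulr0.
Qed.

Fixpoint Pk d (f : 'I_d -> R) k : 'I_(d ^ k.+1) -> R :=
  match k return 'I_(d ^ k.+1) -> R with
  | k'.+1 => fun i => f (@mxtens_unindex d (d ^ k'.+1) i).1 * Pk d f k' (@mxtens_unindex d (d ^ k'.+1) i).2
  | 0 => f
  end.

Lemma Pk_ge0 d (f : 'I_d -> R) k : (forall i, 0 <= f i) -> forall i, 0 <= Pk d f k i.
Proof. by move=> f0; elim: k => [|k IH] i //=; rewrite mulr_ge0. Qed.

Lemma ntens_diag d (f : 'I_d -> R) k :
  ntensmx (diag_state f) k.+1 = diag_state (Pk d f k).
Proof.
elim: k => [|k IH] //.
by rewrite ntensmxSS IH tens_diag.
Qed.

Lemma Sval_Pk d a (p q : 'I_d -> R) k : (forall i, 0 <= p i) -> (forall i, 0 <= q i) ->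
  Sval a (Pk d p k) (Pk d q k) = Sval a p q ^+ k.+1.
Proof.
move=> p0 q0; elim: k => [|k IH]; first by rewrite expr1.
rewrite exprS -IH /Sval mulr_sum; apply: eq_bigr => i _ /=.
by rewrite gmM2 ?Pk_ge0.
Qed.

End Tens.


Lemma Rf_pow (R : realType) (a S : R) k : 0 <= S ->
  (((k.+1)%:R^-1 : R)%:E * Rf a (S ^+ k.+1) = Rf a S)%E.
Proof.
move=> S0; rewrite /Rf expf_eq0 /=.
case: ifPn => hS.
  by rewrite mulry gtr0_sg ?invr_gt0 ?ltr0Sn // mul1e.
have Sp : 0 < S by rewrite lt_def hS S0.
rewrite -EFinM lnXn // -(mulr_natr (ln S)); congr EFin.
have k0 : (k.+1)%:R != 0 :> R by rewrite pnatr_eq0.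
by rewrite mulrCA (mulrC (ln S)) mulKf.
Qed.

Theorem mainTheorem10 (R : realType) (d : nat) (p q : 'I_d -> R) :
  is_prob p -> is_prob q ->
  let rho := diag_state p in
  let sigma := diag_state q in
  ((forall a : R, 0 < a < 1 -> Dtest rho sigma a = renyi a p q) <->
   (exists a : R, 0 < a < 1 /\ Dtest rho sigma a = renyi a p q)) /\
  ((exists a : R, 0 < a < 1 /\ Dtest rho sigma a = renyi a p q) <->
   (exists Om0 : {set 'I_d},
      (forall w, w \in Om0 ->
         (\sum_(x in Om0) q x) * p w = (\sum_(x in Om0) p x) * q w) /\
      (forall w, w \in ~: Om0 ->
         (\sum_(x in ~: Om0) q x) * p w = (\sum_(x in ~: Om0) p x) * q w))) /\
  ((exists Om0 : {set 'I_d},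
      (forall w, w \in Om0 ->
         (\sum_(x in Om0) q x) * p w = (\sum_(x in Om0) p x) * q w) /\
      (forall w, w \in ~: Om0 ->
         (\sum_(x in ~: Om0) q x) * p w = (\sum_(x in ~: Om0) p x) * q w)) ->
   forall a : R, 0 < a < 1 ->
     Dtest rho sigma a = Dtest_hat rho sigma a /\
     Dtest_hat rho sigma a = renyi a p q).
Proof.
move=> [p0 _] [q0 _] rho sigma.
have K1 : forall a, 0 < a < 1 -> (exists Om, cond p q Om) -> Dtest rho sigma a = renyi a p q.
  move=> a a01 [Om hc]; rewrite renyi_Rf /rho /sigma.
  apply/eqP; rewrite eq_le Dtest_le //=.
  rewrite (proj2 (cond_iff Om a01 p0 q0) hc); exact: Dtest_ge_ind.
have K2 : forall a, 0 < a < 1 -> Dtest rho sigma a = renyi a p q -> exists Om, cond p q Om.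
  move=> a a01 e; have /andP[_ a1] := a01.
  pose F := fun Om : {set 'I_d} => sfun a p q (ind Om).
  case: (@arg_minP _ _ _ (finset.set0 : {set 'I_d}) predT F isT) => Om0 _ hmin.
  exists Om0; apply/(cond_iff Om0 a01 p0 q0).
  have hle := Dtest_le_vertex a01 p0 q0 (fun Om => hmin Om isT).
  have [hS _] := sfun_ge a01 p0 q0 (@cube_ind R _ Om0).
  apply/eqP; rewrite eq_le hS /= leNgt; apply/negP => hlt.
  have := Rf_santi a1 (Sval_ge0 a p q) hlt.
  rewrite -renyi_Rf -e => h.
  by have := lt_le_trans h hle; rewrite ltxx.
have K3 : forall a, 0 < a < 1 -> (exists Om, cond p q Om) ->
    Dtest rho sigma a = Dtest_hat rho sigma a /\ Dtest_hat rho sigma a = renyi a p q.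
  move=> a a01 hc; have hD := K1 a a01 hc.
  have hub : (Dtest_hat rho sigma a <= renyi a p q)%E.
    apply: ge_ereal_sup => _ [k _ <-].
    rewrite /rho /sigma !ntens_diag.
    have h0 : (0 <= ((k.+1)%:R^-1 : R)%:E)%E by rewrite lee_fin invr_ge0 ler0n.
    apply: le_trans (lee_wpmul2l h0 (Dtest_le a01 (Pk_ge0 R d p k p0) (Pk_ge0 R d q k q0))) _.
    by rewrite Sval_Pk // renyi_Rf Rf_pow // Sval_ge0.
  have hlb : (Dtest rho sigma a <= Dtest_hat rho sigma a)%E.
    apply: ereal_sup_ubound; exists 0%N => //.
    by rewrite invr1 mul1e.
  split; apply/eqP; rewrite eq_le.
    by rewrite hlb /= hD.
  by rewrite hub /= -hD.
have half : (0 : R) < (2^-1 : R) < (1 : R).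
  have h1 : (0:R) < 2^-1 by lra.
  have h2 : (2^-1 : R) < 1 by lra.
  by rewrite h1 h2.
split.
  split; first by move=> h; exists 2^-1; split => //; apply: h.
  by case=> a [a01 e] b b01; apply: K1 => //; apply: (K2 a).
split; last by move=> hc a a01; apply: K3.
split; first by case=> a [a01 e]; apply: (K2 a).
by move=> hc; exists 2^-1; split => //; apply: K1.
Qed.
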